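(* Let $q$ be an odd prime power, $s=(q-1)/2$, $a_0,a_1\in\mathbb{F}_q^*$ and $r_0,r_1$ positive integers. Let $$f(x)=\tfrac12 a_0x^{r_0}(1+x^s)+\tfrac12 a_1x^{r_1}(1-x^s).$$ If $f$ is a permutation polynomial of $\mathbb{F}_q$, then its inverse over $\mathbb{F}_q$ is given by $$f^{-1}(x)=\frac12\left(\frac{x}{a_0}\right)^{\tilde r_0}\left(1+\left(\frac{x}{a_0}\right)^s\right)+\frac12(-1)^{t_1}\left(\frac{x}{a_1}\right)^{\tilde r_1}\left(1+(-1)^{r_1}\left(\frac{x}{a_1}\right)^s\right),$$ where $\tilde r_i,t_i\in\mathbb{Z}$ satisfy $1\le\tilde r_i<s$ and $r_i\tilde r_i+st_i=1$ for $i=0,1$.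
   Context: A polynomial $f\in\mathbb{F}_q[x]$ is a permutation polynomial of $\mathbb{F}_q$ if it induces a bijection of $\mathbb{F}_q$. A polynomial $g$ is the inverse of $f$ over $\mathbb{F}_q$ if $g(f(c))=c$ for all $c\in\mathbb{F}_q$. *)

(* Defs.v *)
From mathcomp Require Import all_boot all_order all_algebra all_field.
Set Implicit Arguments. Unset Strict Implicit. Unset Printing Implicit Defensive.
Import GRing.Theory.
Local Open Scope ring_scope.

Definition is_perm_poly (F : finFieldType) (f : {poly F}) : Prop :=
  bijective (fun c : F => f.[c]).

Definition is_inverse_poly (F : finFieldType) (g f : {poly F}) : Prop :=
  forall c : F, g.[f.[c]] = c.

Definition half_order (F : finFieldType) : nat := (#|F|.-1)./2.

Definition fpoly (F : finFieldType) (a0 a1 : F) (r0 r1 : nat) : {poly F} :=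
  let s := half_order F in
  (2%:R : F)^-1 *: (a0 *: 'X^r0 * (1 + 'X^s))
  + (2%:R : F)^-1 *: (a1 *: 'X^r1 * (1 - 'X^s)).

Definition ginv (F : finFieldType) (a0 a1 : F) (r1 rt0 rt1 : nat) (t1 : int)
  : {poly F} :=
  let s := half_order F in
  let y0 := a0^-1 *: 'X in
  let y1 := a1^-1 *: 'X in
  (2%:R : F)^-1 *: (y0 ^+ rt0 * (1 + y0 ^+ s))
  + ((2%:R : F)^-1 * ((-1 : F) ^ t1)) *:
      (y1 ^+ rt1 * (1 + ((-1 : F) ^+ r1) *: y1 ^+ s)).

(* Main.v *)
Require Import Defs.
From mathcomp Require Import all_boot all_order all_algebra all_field.
From mathcomp Require Import ring zify.
Import GRing.Theory.
Local Open Scope ring_scope.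
Set Implicit Arguments. Unset Strict Implicit.
Lemma two_neq0 (F : finFieldType) : odd #|F| -> (2%:R : F) != 0.
Proof.
move=> Hodd; apply/negP => /eqP H2.
have ch : (2%N \in [pchar F]) by apply/andP; split => //; apply/eqP.
have := card_pprimeChar ch.
set n := logn _ _ => Hc.
have : #|pPrimeCharType ch| = #|F| by [].
move=> E; rewrite E in Hc.
move: Hodd; rewrite Hc.
case: n Hc => [|k] Hc; last by rewrite oddX.
move=> _.
have : (1 < #|F|)%N.
  rewrite (cardD1 (0:F)) (cardD1 (1:F)) !inE oner_neq0 //.
by rewrite Hc.
Qed.
Lemma fE (F : finFieldType) (a0 a1 : F) r0 r1 c :
  (fpoly a0 a1 r0 r1).[c] = 2%:R^-1 * (a0 * c^+r0 * (1 + c ^+ half_order F))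
    + 2%:R^-1 * (a1 * c^+r1 * (1 - c ^+ half_order F)).
Proof. by rewrite /fpoly !hornerE. Qed.
Lemma gE (F : finFieldType) (a0 a1 : F) r1 rt0 rt1 t1 y :
  (ginv a0 a1 r1 rt0 rt1 t1).[y] =
  2%:R^-1 * ((a0^-1 * y) ^+ rt0 * (1 + (a0^-1 * y)^+ half_order F))
  + (2%:R^-1 * (-1) ^ t1) * ((a1^-1 * y) ^+ rt1 * (1 + (-1) ^+ r1 * (a1^-1*y)^+ half_order F)).
Proof. by rewrite /ginv !(hornerE, horner_exp). Qed.
Lemma powlem (F : finFieldType) (c : F) (n s : nat) (t : int) :
  c != 0 -> n%:Z + s%:Z * t = 1 -> c ^+ n * (c ^+ s) ^ t = c.
Proof.
move=> c0 H.
have uc : c \is a GRing.unit by rewrite unitfE.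
have -> : c ^+ n = c ^ (n%:Z) by [].
have -> : c ^+ s = c ^ (s%:Z) by [].
by rewrite exprz_exp -exprzDr // H expr1z.
Qed.
Lemma sqcase (F : finFieldType) (c : F) : odd #|F| -> c != 0 ->
  c ^+ half_order F = 1 \/ c ^+ half_order F = -1.
Proof.
move=> Ho c0.
have Hq : #|F| = ((half_order F).*2).+1.
  rewrite /half_order; case: #|F| Ho => // m /= Ho.
  by rewrite -{1}(odd_double_half m) (negbTE Ho).
have := expf_card c; rewrite Hq exprS -muln2 exprM => /eqP.
rewrite -[X in _ == X]mulr1 (inj_eq (mulfI c0)) sqrf_eq1.
by case/orP => /eqP ->; auto.
Qed.
Lemma count_lem (F : finFieldType) (f : F -> F) (e : F) (s : nat) :
  (0 < s)%N -> #|F| = (s.*2).+1 -> injective f ->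
  (forall c, c != 0 -> f c ^+ s = e) -> False.
Proof.
move=> s0 Hq fi Hf.
pose B := [set y : F | y ^+ s == e].
have sub : f @: [set~ (0:F)] \subset B.
  apply/subsetP => y /imsetP [c]; rewrite !inE => c0 ->; by rewrite Hf.
have := subset_leq_card sub; rewrite card_imset // cardsC1 Hq /=.
have : (#|B| <= s)%N.
  have := @max_poly_roots F ('X^s - e%:P) (enum B).
  rewrite size_XnsubC // -cardE; apply.
  - by rewrite -size_poly_eq0 size_XnsubC.
  - apply/allP => y; rewrite mem_enum inE /root !hornerE subr_eq0.
  - by [].
  - exact: enum_uniq.

move=> h1 h2; have := leq_trans h2 h1; rewrite -addnn.
lia.
Qed.
Theorem corollary4p1 (F : finFieldType) (a0 a1 : F) (r0 r1 : nat)
    (rt0 rt1 : nat) (t0 t1 : int) :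
  odd #|F| ->
  a0 != 0 -> a1 != 0 ->
  (0 < r0)%N -> (0 < r1)%N ->
  (1 <= rt0)%N -> (rt0 < half_order F)%N ->
  (1 <= rt1)%N -> (rt1 < half_order F)%N ->
  (r0 * rt0)%:Z + (half_order F)%:Z * t0 = 1 ->
  (r1 * rt1)%:Z + (half_order F)%:Z * t1 = 1 ->
  is_perm_poly (fpoly a0 a1 r0 r1) ->
  is_inverse_poly (ginv a0 a1 r1 rt0 rt1 t1) (fpoly a0 a1 r0 r1).
Proof.
move=> Ho a00 a10 r00 r10 rt01 rt0s rt11 rt1s E0 E1 [finv fK _].
set s := half_order F in rt0s rt1s E0 E1 *.
have H2 := two_neq0 Ho.
have s0 : (0 < s)%N by apply: leq_trans rt0s.
have Hq : #|F| = (s.*2).+1.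
  rewrite /s /half_order; case: #|F| Ho => // m /= Ho.
  by rewrite -{1}(odd_double_half m) (negbTE Ho).
have fi : injective (fun c => (fpoly a0 a1 r0 r1).[c]) := can_inj fK.
have fsq : forall c, c ^+ s = 1 -> (fpoly a0 a1 r0 r1).[c] = a0 * c ^+ r0.
  by move=> c Hc; rewrite fE -/s Hc; field.
have fns : forall c, c ^+ s = -1 -> (fpoly a0 a1 r0 r1).[c] = a1 * c ^+ r1.
  by move=> c Hc; rewrite fE -/s Hc; field.
have Hm1 : (-1 : F) != 1.
  by apply/eqP => h; move: H2; rewrite -[2%:R]/(1+1) -{1}h addNr eqxx.
have key : a0 ^+ s = - ((-1) ^+ r1 * a1 ^+ s).
  have hv : (-1 : F) ^+ r1 = 1 \/ (-1 : F) ^+ r1 = -1.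
    by rewrite -signr_odd; case: (odd r1); [right|left].
  case: (sqcase Ho a00) => ha0; case: (sqcase Ho a10) => ha1;
    rewrite ha0 ha1; case: hv => hv; rewrite hv; try ring;
  exfalso; apply: (count_lem s0 Hq fi (e := a0 ^+ s)) => c c0;
  (case: (sqcase Ho c0) => hc; [rewrite fsq // | rewrite fns //]);
  rewrite exprMn -exprM mulnC exprM hc ?expr1n ?hv ?ha0 ?ha1; ring.
have z : forall n, (0 < n)%N -> (0:F) ^+ n = 0.
  by move=> [|n] // _; rewrite exprS mul0r.
have hv2 : (-1 : F) ^+ r1 * (-1) ^+ r1 = 1.
  by rewrite -exprMn mulrNN mulr1 expr1n.
have v0 : (-1 : F) ^+ r1 != 0 by rewrite expf_neq0 // oppr_eq0 oner_eq0.
move=> c; have [->|c0] := eqVneq c 0.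
  have f0 : (fpoly a0 a1 r0 r1).[0] = 0 by rewrite fE !z //; ring.
  rewrite f0 gE !mulr0 !z //; ring.
case: (sqcase Ho c0) => hc.
  rewrite fsq // gE mulKf //.
  have h1 : (c ^+ r0) ^+ s = 1 by rewrite -exprM mulnC exprM hc expr1n.
  have h2 : (a1^-1 * (a0 * c ^+ r0)) ^+ s = - (-1) ^+ r1.
    rewrite !exprMn h1 mulr1 exprVn key mulrN mulrC mulfK //.
    by rewrite expf_neq0.
  have hc0 : c ^+ (r0 * rt0) = c by have := powlem c0 E0; rewrite hc exp1rz mulr1.
  rewrite h1 h2 -exprM hc0 mulrN hv2 subrr !mulr0 addr0.
  by field.
rewrite (fns c hc) gE mulKf //.
have h1 : (c ^+ r1) ^+ s = (-1) ^+ r1 by rewrite -exprM mulnC exprM hc.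
have h2 : (a0^-1 * (a1 * c ^+ r1)) ^+ s = -1.
  rewrite !exprMn h1 exprVn key invrN mulNr [a1 ^+ _ * _]mulrC mulVf //.
  by rewrite mulf_neq0 // expf_neq0.
have hc1 := powlem c0 E1; rewrite hc in hc1.
rewrite h1 h2 -exprM hv2 addrN !mulr0 add0r.
rewrite -[X in _ = X]hc1; by field.
Qed.
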